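(* Let $\mathcal{S}\subseteq M^*$ be a fixed domain sequence set and let $L\le2|M|^c$ and $l\ge150c\ln|M|/\ln\ln|M|$ be fixed integers. Let $b$ be a constant and let $k\ge 8(b+1)\frac{\ln|\mathcal{S}|+(c+1)\ln|M|}{\ln l}$. Then a set of $k$ independent uniformly random hash functions $h_1,\dots,h_k:M^*\times I\to\{0,\dots,L-1\}$ is $(L,l)$-good for $\mathcal{S}$ with probability at least $1-2|M|^{-b}$.
   Context: Machines $M$ with standing assumption $|M|\ge32$; $c\ge1$ a constant; $I:=\{1,\dots,|M|^c\}$. A job $j$ has a sequence $\mathrm{seq}(j)\in M^*$ and an identifier $\mathrm{ind}(j)\in I$, identifiers being distinct within a job set. A job set $J$ is $\mathcal{S}$-supported if $\mathrm{seq}(j)\in\mathcal{S}$ for all $j\in J$. $C(J)=\max_m\sum_{j\in J}|\{i:\mathrm{seq}(j)_i=m\}|$, $D(J)=\max_j\mathrm{len}(\mathrm{seq}(j))$. For $h$, $h(j):=h(\mathrm{seq}(j),\mathrm{ind}(j))$ and $\mathrm{virt}(j,i)=h(j)+i$ ($i<\mathrm{len}(\mathrm{seq}(j))$). A bad pattern (for $M,L,l,J$) is a collection of sets $B_{T,m}$, $0\le T<2L$, $m\in M$, of pairs $(j,i)$ with $j\in J$ and $\mathrm{seq}(j)_i=m$, each $j$ appearing at most once overall, $|B_{T,m}|\in\{0\}\cup(l,|J|]$, and $\sum|B_{T,m}|>|J|/2$; it occurs for $h$ if $\mathrm{virt}(j,i)=T$ for all $(j,i)\in B_{T,m}$. $h$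 is $(L,l)$-good for $J$ if no bad pattern occurs for $h$. A set $h_1,\dots,h_k$ is $(L,l)$-good for $\mathcal{S}$ if for every $\mathcal{S}$-supported job set $J$ with $L\ge C(J)+D(J)$, at least one $h_i$ is $(L,l)$-good for $J$. *)

(* Defs.v *)
From HB Require Import structures.
From mathcomp Require Import all_boot all_order all_algebra.
From mathcomp Require Import boolp.
Set Implicit Arguments. Unset Strict Implicit. Unset Printing Implicit Defensive.

(* Jobs supported by the sequence set S with identifiers in 'I_nI (0-based
   relabelling of I = {1,...,nI}).  A job is the pair (seq j, ind j). *)
Section Jobs.
Variables (M : finType) (S : seq (seq M)) (nI : nat).

Definition job : finType := (seq_sub S * 'I_nI)%type.
Definition jseq (j : job) : seq M := ssval j.1.
Definition jind (j : job) : 'I_nI := j.2.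

Definition job_set (J : {set job}) : Prop := {in J &, injective jind}.

Definition Cload (J : {set job}) : nat :=
  \max_(m : M) \sum_(j in J) count_mem m (jseq j).
Definition Dlen (J : {set job}) : nat := \max_(j in J) size (jseq j).

Variable L : nat.

Definition virt (h : {ffun job -> 'I_L}) (j : job) (i : nat) : nat := h j + i.

(* B T m is the set B_{T,m}, given as a duplicate-free list of pairs (j, i) *)
Definition bad_pattern (l : nat) (J : {set job})
    (B : 'I_(2 * L) -> M -> seq (job * nat)) : Prop :=
  [/\ forall T m, uniq (B T m),
      forall T m p, p \in B T m ->
        [/\ p.1 \in J, p.2 < size (jseq p.1) & nth m (jseq p.1) p.2 = m],
      forall T m T' m' j i i', (j, i) \in B T m -> (j, i') \in B T' m' ->
        [/\ T = T', m = m' & i = i'],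
      forall T m, size (B T m) = 0 \/ (l < size (B T m) <= #|J|)
    & #|J| < 2 * \sum_(T < 2 * L) \sum_(m : M) size (B T m)].

Definition occurs (h : {ffun job -> 'I_L}) (B : 'I_(2 * L) -> M -> seq (job * nat)) : Prop :=
  forall T m j i, (j, i) \in B T m -> virt h j i = T.

Definition good_for_jobs (l : nat) (h : {ffun job -> 'I_L}) (J : {set job}) : Prop :=
  ~ exists B, bad_pattern l J B /\ occurs h B.

Definition good_for_S (l k : nat) (hs : {ffun 'I_k -> {ffun job -> 'I_L}}) : Prop :=
  forall J : {set job}, job_set J -> Cload J + Dlen J <= L ->
    exists i : 'I_k, good_for_jobs l (hs i) J.

End Jobs.

(* Main.v *)
Require Import Defs.
From HB Require Import structures.
From mathcomp Require Import all_boot all_order all_algebra.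
From mathcomp Require Import boolp reals exp.
From mathcomp Require Import sequences.
From mathcomp Require Import ring lra.
Import Order.TTheory GRing.Theory Num.Theory.
Set Implicit Arguments. Unset Strict Implicit. Unset Printing Implicit Defensive.

Section File1.

Lemma union_bound (T I : finType) (A : {set T}) (Pr : pred I) (B : I -> {set T}) :
  (forall x, x \in A -> exists2 i, Pr i & x \in B i) ->
  (#|A| <= \sum_(i | Pr i) #|B i|)%N.
Proof.
move=> H.
have -> : (\sum_(i | Pr i) #|B i| = \sum_(i | Pr i) \sum_x (x \in B i))%N.
  by apply: eq_bigr => i _; rewrite -sum1_card big_mkcond.
rewrite exchange_big /= -sum1_card big_mkcond /=.
apply: leq_sum => x _; case: ifP => // xA.
have [i Pi xB] := H x xA.
rewrite (bigD1 i) //= xB; exact: leq_addr.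
Qed.

Section Comb.
Variables (M : finType) (S : seq (seq M)) (nI L l : nat).
Local Notation job := (job S nI).
Definition Kb := (\max_(s <- S) size s)%N.
Definition Pt := (job * 'I_Kb)%type.
Definition key := ('I_(2 * L) * M)%type.
Variable J : {set job}.

Definition Pm (m : M) : {set Pt} :=
  [set p : Pt | [&& p.1 \in J, (p.2 < size (jseq p.1))%N & nth m (jseq p.1) p.2 == m]].

Definition consb (h : {ffun job -> 'I_L}) (F : {ffun key -> {set Pt}}) : bool :=
  [forall k : key, forall p in F k, (h p.1 + p.2 == k.1)%N].

Definition sgm (F : {ffun key -> {set Pt}}) : nat := (\sum_k #|F k|)%N.

Definition wf (F : {ffun key -> {set Pt}}) : bool :=
  [&& [forall k, F k \subset Pm k.2],
      [forall k, (F k == set0) || (l < #|F k|)%N],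
      [forall k1, forall k2, forall p in F k1, forall p2 in F k2,
          (p.1 == p2.1) ==> ((k1 == k2) && (p == p2))]
    & (#|J| < 2 * sgm F)%N].

Lemma jseq_le_Kb (j : job) : (size (jseq j) <= Kb)%N.
Proof. by apply: (leq_bigmax_seq (F := fun s => size s)) => //; exact: ssvalP. Qed.

Lemma size_le_card (s : seq (job * nat)) :
  uniq s -> (forall x, x \in s -> x.2 < Kb)%N ->
  (size s <= #|[set p : Pt | (p.1, nat_of_ord p.2) \in s]|)%N.
Proof.
elim: s => [|x s IH] //= /andP[xs us] Hs.
have xK : (x.2 < Kb)%N by apply: Hs; rewrite inE eqxx.
set p0 : Pt := (x.1, Ordinal xK).
have -> : [set p : Pt | (p.1, nat_of_ord p.2) \in x :: s] =
          p0 |: [set p : Pt | (p.1, nat_of_ord p.2) \in s].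
  apply/setP => p; rewrite !inE.
  by congr (_ || _).
rewrite cardsU1 inE /=.
have -> : ((x.1, x.2) \in s) = false by case: x xs {Hs xK p0} => ? ?; apply/negbTE.
rewrite add1n ltnS; apply: IH => // y ys; apply: Hs; by rewrite inE ys orbT.
Qed.

Lemma A1 (h : {ffun job -> 'I_L}) : ~ good_for_jobs l h J ->
  exists F, wf F && consb h F.
Proof.
move=> /contrapT [B [[BU BP BD BS BSum] Occ]].
pose F : {ffun key -> {set Pt}} :=
  [ffun k : key => [set p : Pt | (p.1, nat_of_ord p.2) \in B k.1 k.2]].
have FE k p : (p \in F k) = ((p.1, nat_of_ord p.2) \in B k.1 k.2) by rewrite ffunE inE.
have HK k x : x \in B k.1 k.2 -> (x.2 < Kb)%N.
  by case: x => j i /BP [_ /= + _] => /leq_trans; apply; exact: jseq_le_Kb.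
have szF k : (size (B k.1 k.2) <= #|F k|)%N.
  apply: leq_trans (size_le_card (BU _ _) (HK k)) _.
  by apply: subset_leq_card; apply/subsetP => p; rewrite inE FE.
exists F; apply/andP; split; last first.
  apply/forallP => k; apply/forall_inP => p; rewrite FE => /Occ.
  by rewrite /virt => ->.
apply/and4P; split.
- apply/forallP => k; apply/subsetP => p; rewrite FE => /BP [pJ ps pn].
  by rewrite inE pJ ps /= pn eqxx.
- apply/forallP => k; case: (BS k.1 k.2) => [E|/andP[lt _]].
    apply/orP; left; apply/eqP/setP => p; rewrite FE inE.
    by move: E => /size0nil ->.
  by apply/orP; right; apply: leq_trans lt (szF k).
- apply/forallP => k1; apply/forallP => k2; apply/forall_inP => p pF.
  apply/forall_inP => p2 p2F; apply/implyP => /eqP E.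
  rewrite FE in pF; rewrite FE in p2F.
  move: p2F; rewrite -E => p2F.
  have [E1 E2 E3] := BD _ _ _ _ _ _ _ pF p2F.
  apply/andP; split.
    by case: k1 k2 E1 E2 {pF p2F} => a b [c d] /= -> ->.
  apply/eqP; case: p p2 E E3 {pF p2F} => a b [c d] /= -> E3.
  by congr pair; apply: val_inj.
- apply: leq_trans BSum _; rewrite leq_mul2l /sgm /=.
  rewrite pair_bigA /=; apply: leq_sum => k _.
  exact: szF.
Qed.

End Comb.

End File1.

Section File2.

Section Comb2.
Variables (M : finType) (S : seq (seq M)) (nI L l : nat).
Local Notation job := (job S nI).
Variable J : {set job}.
Local Notation Pt := (Pt S nI).
Local Notation key := (key M L).

Lemma foldr_prod (T : finType) (f : T -> nat) :
  foldr (fun x : T => [eta muln (f x)]) 1%N (enum T) = (\prod_j f j)%N.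
Proof. by rewrite enumT bigop.unlock. Qed.

Lemma card_ffun_prod (T : finType) (G : T -> {set 'I_L}) :
  #|[set h : {ffun T -> 'I_L} | [forall j, h j \in G j]]| = (\prod_j #|G j|)%N.
Proof.
have -> : #|[set h : {ffun T -> 'I_L} | [forall j, h j \in G j]]| =
          #|family (fun j => mem (G j))|.
  apply: eq_card => h; rewrite inE; apply/forallP/familyP => H j; exact: H.
rewrite card_family foldr_map; exact: foldr_prod.
Qed.

Lemma A2 (F : {ffun key -> {set Pt}}) : (0 < L)%N -> wf l J F ->
  (#|[set h | consb h F]| * L ^ sgm F <= L ^ #|job|)%N.
Proof.
move=> L0 /and4P [_ _ Hd0 _].
have Hd k1 k2 p p2 : p \in F k1 -> p2 \in F k2 -> p.1 = p2.1 -> k1 = k2 /\ p = p2.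
  move=> pF p2F E; move: Hd0 => /forallP /(_ k1) /forallP /(_ k2) /forall_inP /(_ p pF).
  by move=> /forall_inP /(_ p2 p2F); rewrite E eqxx /= => /andP [/eqP -> /eqP ->].
pose G j := [set x : 'I_L | [forall k : key, forall p in F k, (p.1 == j) ==> (x + p.2 == k.1)%N]].
pose cov := [set j | [exists k : key, exists p in F k, p.1 == j]].
have sub : (#|[set h | consb h F]| <= #|[set h : {ffun job -> 'I_L} | [forall j, h j \in G j]]|)%N.
  apply: subset_leq_card; apply/subsetP => h; rewrite !inE => /forallP Hc.
  apply/forallP => j; rewrite inE; apply/forallP => k; apply/forall_inP => p pF.
  by apply/implyP => /eqP <-; move: (Hc k) => /forall_inP; apply.
have G1 j : j \in cov -> (#|G j| <= 1)%N.
  rewrite inE => /existsP [k /exists_inP [p pF /eqP pj]].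
  apply/card_le1P => x; rewrite inE => /forallP /(_ k) /forall_inP /(_ p pF).
  rewrite pj eqxx /= => /eqP Ex y; rewrite inE.
  apply/idP/idP => [/forallP /(_ k) /forall_inP /(_ p pF)|/eqP ->].
    rewrite pj eqxx /= => /eqP Ey; apply/eqP/val_inj/eqP.
    by rewrite -(eqn_add2r p.2) Ex Ey.
  apply/forallP => k'; apply/forall_inP => p' pF'; apply/implyP => /eqP E'.
  have [-> ->] := Hd k' k p' p pF' pF (etrans E' (esym pj)).
  by rewrite Ex.
have prodG : (\prod_j #|G j| <= L ^ #|[predC cov]|)%N.
  rewrite -prod_nat_const (bigID (fun j => j \in cov)) /=.
  rewrite -[X in (_ <= X)%N]mul1n; apply: leq_mul.
    apply: (@leq_trans (\prod_(j | j \in cov) 1)%N); first by apply: leq_prod => j /G1.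
    by rewrite big1_eq.
  apply: leq_prod => j _; apply: leq_trans (subset_leq_card (subsetT _)) _.
  by rewrite cardsT card_ord.
pose Q := [set q : key * Pt | q.2 \in F q.1].
have cardQ : #|Q| = sgm F.
  rewrite /sgm -sum1_card.
  rewrite (eq_bigr (fun k => \sum_(p | p \in F k) 1)%N); last by move=> k _; rewrite sum1_card.
  rewrite (pair_big_dep xpredT (fun k p => p \in F k) (fun _ _ => 1%N)) /=.
  by apply: eq_bigl => q; rewrite inE.
have sigcov : (sgm F <= #|cov|)%N.
  rewrite -cardQ -(@card_in_imset _ _ (fun q : key * Pt => q.2.1)).
    apply: subset_leq_card; apply/subsetP => j /imsetP [q]; rewrite inE => qF ->.
    by rewrite inE; apply/existsP; exists q.1; apply/exists_inP; exists q.2.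
  move=> [k p] [k' p']; rewrite !inE /= => pF p'F E.
  by have [-> ->] := Hd k k' p p' pF p'F E.
apply: leq_trans (leq_mul (leq_trans sub _) (leq_pexp2l L0 sigcov)) _.
  by rewrite card_ffun_prod; exact: prodG.
by rewrite -expnD addnC cardC.
Qed.

End Comb2.

End File2.

Section File3.

Lemma count_ord (M : eqType) (m : M) (s : seq M) (K : nat) : (size s <= K)%N ->
  (\sum_(i < K) ((i < size s) && (nth m s i == m)) = count_mem m s)%N.
Proof.
move=> sK.
rewrite -sum1_count (big_nth m) (big_nat_widen _ _ _ _ _ sK) big_mkord.
rewrite [RHS]big_mkcond; apply: eq_bigr => i _; rewrite andbC; by case: (_ && _).
Qed.

Section Comb3.
Variables (M : finType) (S : seq (seq M)) (nI L l : nat).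
Local Notation job := (job S nI).
Variable J : {set job}.
Local Notation Pt := (Pt S nI).
Local Notation key := (key M L).

Lemma cardPm m : (#|Pm J m| <= Cload J)%N.
Proof.
have -> : #|Pm J m| = (\sum_(p : Pt) ((p.1 \in J) && ((p.2 < size (jseq p.1)) && (nth m (jseq p.1) p.2 == m))))%N.
  rewrite -sum1_card big_mkcond /=; apply: eq_bigr => p _; rewrite inE.
  by case: (_ && _).
rewrite -(pair_bigA _ (fun j (i : 'I_(Kb S)) => nat_of_bool ((j \in J) && ((i < size (jseq j)) && (nth m (jseq j) i == m))))) /=.
apply: (@leq_trans (\sum_(j in J) count_mem m (jseq j))%N); last first.
  by apply: (leq_bigmax (F := fun m => \sum_(j in J) count_mem m (jseq j))%N).
rewrite [X in (_ <= X)%N]big_mkcond /=; apply: leq_sum => j _.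
case: (j \in J) => /=; last by rewrite big1.
by rewrite count_ord // jseq_le_Kb.
Qed.

End Comb3.

End File3.

Section File4.
Local Open Scope ring_scope.

Section Real1.
Variable R : realType.

Lemma sum_subsets (T : finType) (B : {set T}) (g : nat -> R) :
  \sum_(A : {set T} | A \subset B) g #|A| =
  \sum_(t < #|T|.+1) 'C(#|B|, t)%:R * g t.
Proof.
rewrite (partition_big (fun A : {set T} => (inord #|A| : 'I_#|T|.+1)) xpredT) //=.
apply: eq_bigr => t _.
have E (A : {set T}) : (inord #|A| == t :> 'I_#|T|.+1) = (#|A| == t).
  by rewrite -val_eqE /= inordK // ltnS; apply: max_card.
rewrite (eq_bigr (fun _ => g t)); last first.
  move=> A /andP [_] /eqP <-; rewrite inordK // ltnS; apply: max_card.
rewrite sumr_const -cards_draws mulr_natl; congr (_ *+ _).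
apply: eq_card => A; rewrite !inE; congr (_ && _).
by rewrite -val_eqE /= inordK // ltnS; apply: max_card.
Qed.

End Real1.

Section Real2.
Variable R : realType.
Variables (M : finType) (S : seq (seq M)) (nI L l : nat).
Local Notation job := (job S nI).
Variable J : {set job}.
Local Notation Pt := (Pt S nI).
Local Notation key := (key M L).

Definition badh : {set {ffun job -> 'I_L}} :=
  [set h : {ffun job -> 'I_L} | ~~ `[< good_for_jobs l h J >]].

Definition w (y : R) (k : key) (A : {set Pt}) : R :=
  if (A \subset Pm J k.2) && ((A == set0) || (l < #|A|)%N) then (y / L%:R) ^+ #|A| else 0.

Lemma B1 : (#|badh|%:R : R) <=
  \sum_(F : {ffun key -> {set Pt}} | wf l J F) (#|[set h | consb h F]|%:R : R).
Proof.
rewrite -natr_sum ler_nat; apply: union_bound => h; rewrite inE => /asboolPn /A1 [F /andP [wF cF]].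
by exists F => //; rewrite inE.
Qed.

Lemma B2 (F : {ffun key -> {set Pt}}) : (0 < L)%N -> wf l J F ->
  (#|[set h | consb h F]|%:R : R) <= (L ^ #|job|)%:R * (L%:R ^+ sgm F)^-1.
Proof.
move=> L0 wF; have := A2 L0 wF; rewrite -(ler_nat R).
rewrite natrM natrX => H.
have LX : 0 < (L%:R : R) ^+ sgm F by rewrite exprn_gt0 // ltr0n.
by rewrite -ler_pdivlMr // in H.
Qed.

Lemma B3 (a : R) (F : {ffun key -> {set Pt}}) : (0 < L)%N -> 0 <= a -> wf l J F ->
  (L%:R ^+ sgm F)^-1 <= expR (- (#|J|%:R * a / 2)) * \prod_k w (expR a) k (F k).
Proof.
move=> L0 a0 wF; move: (wF) => /and4P [/forallP Hs /forallP Hz _ Hsum].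
have -> : \prod_k w (expR a) k (F k) = (expR a / L%:R) ^+ sgm F.
  rewrite /sgm -prodrXr; apply: eq_bigr => k _.
  by rewrite /w Hs Hz.
rewrite expr_div_n -expRM_natl mulrCA mulrA -expRD.
have LX : 0 < (L%:R : R) ^+ sgm F by rewrite exprn_gt0 // ltr0n.
rewrite mulrC; apply: ler_peMr; first by rewrite invr_ge0 ltW.
apply: le_trans (expR_ge1Dx _); rewrite lerDl.
have : (#|J|%:R : R) < 2 * (sgm F)%:R by rewrite -natrM ltr_nat.
move=> H; rewrite subr_ge0 ler_pdivrMr ?ltr0n // mulrAC [_ * 2]mulrC.
by apply: ler_wpM2r => //; exact: ltW.
Qed.

Lemma B4 (y : R) :
  \sum_(F : {ffun key -> {set Pt}}) \prod_k w y k (F k) = \prod_k \sum_A w y k A.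
Proof. by rewrite bigA_distr_bigA. Qed.

Lemma B5 (y : R) (k : key) :
  \sum_A w y k A = 1 + \sum_(t < #|{: Pt}|.+1)
     (if (l < t)%N then 'C(#|Pm J k.2|, t)%:R * (y / L%:R) ^+ t else 0).
Proof.
pose g (t : nat) : R := if (t == 0%N) || (l < t)%N then (y / L%:R) ^+ t else 0.
rewrite /w -big_mkcond big_mkcondr /=.
rewrite (eq_bigr (fun A : {set Pt} => g #|A|)); last by move=> A _; rewrite /g cards_eq0.
rewrite sum_subsets big_ord_recl [in RHS]big_ord_recl /= bin0 /g /= expr0 mulr1 add0r.
congr (_ + _); apply: eq_bigr => i _.
by case: ifP => _; rewrite ?mulr0.
Qed.

End Real2.

End File4.

Section File5.
Local Open Scope ring_scope.

Lemma ffact_le_exp n m : (n ^_ m <= n ^ m)%N.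
Proof.
elim: m n => [|m IH] n; first by rewrite ffactn0 expn0.
rewrite ffactnS expnS leq_mul2l; apply/orP; right.
apply: leq_trans (IH n.-1) _; case: m {IH} => [|m]; first by rewrite !expn0.
by rewrite leq_exp2r // leq_pred.
Qed.

Section Real3.
Variable R : realType.

Lemma fact_bound (t : nat) : (0 < t)%N ->
  (t%:R : R) ^+ t / (t`!)%:R <= expR (1 : R) ^+ t.
Proof.
case: t => // t _.
rewrite -expRM_natl mulr1.
have := @expR_ge1Dxn R (t.+1)%:R t (ler0n _ _).
lra.
Qed.

Lemma binom_bound (C L t : nat) (z : R) : (C <= L)%N -> (0 < L)%N -> (0 < t)%N -> 0 <= z ->
  'C(C, t)%:R * (z / L%:R) ^+ t <= (expR 1 * z / t%:R) ^+ t.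
Proof.
move=> CL L0 t0 z0.
have Lp : (0 : R) < L%:R by rewrite ltr0n.
have tp : (0 : R) < t%:R by rewrite ltr0n.
have fp : (0 : R) < (t`!)%:R by rewrite ltr0n fact_gt0.
have Cb : ('C(C, t)%:R : R) <= (L%:R) ^+ t / (t`!)%:R.
  rewrite ler_pdivlMr // -natrM -natrX ler_nat bin_ffact.
  by apply: leq_trans (ffact_le_exp _ _) _; rewrite leq_exp2r.
apply: le_trans (ler_wpM2r _ Cb) _; first by rewrite exprn_ge0 // divr_ge0 // ltW.
have tX : (0 : R) < t%:R ^+ t by rewrite exprn_gt0.
have LX : (0 : R) < L%:R ^+ t by rewrite exprn_gt0.
have -> : L%:R ^+ t / (t`!)%:R * (z / L%:R) ^+ t = (z ^+ t / t%:R ^+ t) * (t%:R ^+ t / (t`!)%:R).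
  rewrite expr_div_n; field.
  by rewrite !gt_eqF.
have -> : (expR 1 * z / t%:R) ^+ t = (z ^+ t / t%:R ^+ t) * expR 1 ^+ t.
  by rewrite expr_div_n exprMn; field; rewrite gt_eqF.
apply: ler_wpM2l; last exact: fact_bound.
by rewrite divr_ge0 // ?exprn_ge0 // ltW.
Qed.

Lemma geom_bound (r : R) (l n : nat) : 0 <= r -> r <= 1 / 2 ->
  \sum_(t < n) (if (l < t)%N then r ^+ t else 0) <= 2 * r ^+ l.+1.
Proof.
move=> r0 r2.
suff H : \sum_(t < n) (if (l < t)%N then r ^+ t else 0) +
        (if (l < n)%N then 2 * r ^+ n else 2 * r ^+ l.+1) <= 2 * r ^+ l.+1.
  apply: le_trans H; rewrite lerDl; case: ifP => _; rewrite mulr_ge0 // exprn_ge0 //.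
elim: n => [|n IH]; first by rewrite big_ord0 add0r.
rewrite big_ord_recr /=.
have rn : 0 <= r ^+ n by rewrite exprn_ge0.
have rn1 : 2 * r ^+ n.+1 <= r ^+ n.
  by rewrite exprS mulrA; apply: ler_piMl => //; lra.
case: (ltngtP l n) IH => [ln|nl|<-] IH.
- rewrite ltnS ltnW //; apply: le_trans IH; lra.
- have h1 : (l < n)%N = false by apply/negbTE; rewrite -leqNgt ltnW.
  have h2 : (l < n.+1)%N = false by apply/negbTE; rewrite -leqNgt.
  by rewrite h2 addr0.
- by rewrite ltnSn addr0.
Qed.

Lemma prod_bound (I : finType) (d : I -> R) (e : R) :
  (forall i, 0 <= d i <= e) -> \prod_i (1 + d i) <= expR (#|I|%:R * e).
Proof.
move=> H; rewrite expRM_natl -prodr_const.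
apply: ler_prod => i _; have /andP [d0 de] := H i.
apply/andP; split; first lra.
apply: le_trans (expR_ge1Dx _) _; rewrite ler_expR //.
Qed.

End Real3.

End File5.

Section File6.
Local Open Scope ring_scope.

Section Real4.
Variable R : realType.
Variables (M : finType) (S : seq (seq M)) (nI L l : nat).
Local Notation job := (job S nI).
Variable J : {set job}.
Local Notation Pt := (Pt S nI).
Local Notation key := (key M L).

Lemma key_sum (a : R) (k : key) : (0 < L)%N -> (0 < l)%N -> (Cload J <= L)%N ->
  expR 1 * expR a / l%:R <= 1 / 2 ->
  \sum_A w l J (expR a) k A <= 1 + 2 * (expR 1 * expR a / l%:R) ^+ l.+1.
Proof.
move=> L0 l0 CL r2.
have r0 : 0 <= expR 1 * expR a / l%:R by rewrite divr_ge0 ?mulr_ge0 ?expR_ge0.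
rewrite B5 lerD2l.
apply: le_trans (geom_bound _ #|{: Pt}|.+1 r0 r2).
apply: ler_sum => t _; case: ifP => // lt.
have t0 : (0 < t)%N by apply: leq_ltn_trans lt.
apply: le_trans (binom_bound _ _ _ _) _ => //.
- exact: leq_trans (cardPm J k.2) CL.
- exact: expR_ge0.
rewrite lerXn2r ?nnegrE ?divr_ge0 ?mulr_ge0 ?expR_ge0 //.
apply: ler_wpM2l; first by rewrite mulr_ge0 ?expR_ge0.
by rewrite lef_pV2 ?posrE ?ltr0n // ler_nat ltnW.
Qed.

Lemma w_ge0 (y : R) (k : key) (A : {set Pt}) : 0 <= y -> 0 <= w l J y k A.
Proof. by move=> y0; rewrite /w; case: ifP => // _; rewrite exprn_ge0 // divr_ge0. Qed.

Lemma qJ (a : R) : (0 < L)%N -> (0 < l)%N -> 0 <= a -> (Cload J <= L)%N ->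
  expR 1 * expR a / l%:R <= 1 / 2 ->
  (#|badh L l J|%:R : R) / (L ^ #|job|)%:R <=
  expR (- (#|J|%:R * a / 2)) * expR (#|{: key}|%:R * (2 * (expR 1 * expR a / l%:R) ^+ l.+1)).
Proof.
move=> L0 l0 a0 CL r2.
set E := expR (- (#|J|%:R * a / 2)).
have Lj : (0 : R) < (L ^ #|job|)%:R by rewrite ltr0n expn_gt0 L0.
rewrite ler_pdivrMr //.
apply: le_trans (B1 R L l J) _.
have step1 : \sum_(F : {ffun key -> {set Pt}} | wf l J F) (#|[set h | consb h F]|%:R : R) <=
   \sum_(F : {ffun key -> {set Pt}} | wf l J F) (L ^ #|job|)%:R * (E * \prod_k w l J (expR a) k (F k)).
  apply: ler_sum => F wF; apply: le_trans (B2 _ L0 wF) _.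
  by apply: ler_wpM2l; [exact: ltW | exact: B3].
apply: le_trans step1 _.
rewrite -mulr_sumr mulrC; apply: ler_wpM2r; first exact: ltW.
rewrite -mulr_sumr; apply: ler_wpM2l; first exact: expR_ge0.
apply: (@le_trans _ _ (\sum_(F : {ffun key -> {set Pt}}) \prod_k w l J (expR a) k (F k))).
  rewrite [X in _ <= X](bigID (wf l J)) /= lerDl; apply: sumr_ge0 => F _.
  by apply: prodr_ge0 => k _; apply: w_ge0; exact: expR_ge0.
rewrite B4.
have -> : \prod_(k : key) \sum_(A : {set Pt}) w l J (expR a) k A =
          \prod_(k : key) (1 + (\sum_(A : {set Pt}) w l J (expR a) k A - 1)).
  by apply: eq_bigr => k _; rewrite addrC subrK.
apply: prod_bound => k; apply/andP; split.
  rewrite B5 addrC addKr; apply: sumr_ge0 => t _; case: ifP => // _.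
  by rewrite mulr_ge0 // exprn_ge0 // divr_ge0 // ?expR_ge0.
by rewrite lerBlDl; apply: key_sum.
Qed.

End Real4.

End File6.

Section File7.

Section Final1.
Variables (M : finType) (S : seq (seq M)) (nI L l : nat).
Local Notation job := (job S nI).

Lemma small_good (J : {set job}) (h : {ffun job -> 'I_L}) :
  (#|J| <= l)%N -> good_for_jobs l h J.
Proof.
move=> Jl [B [[_ _ _ BS BSum] _]].
have Z : (\sum_(T < 2 * L) \sum_(m : M) size (B T m) = 0)%N.
  apply: big1 => T _; apply: big1 => m _.
  case: (BS T m) => // /andP [lt le].
  by have := leq_ltn_trans (leq_trans le Jl) lt; rewrite ltnn.
by move: BSum; rewrite Z muln0.
Qed.

Lemma bad_sum (k : nat) : (0 < k)%N ->
  (#|~: [set hs : {ffun 'I_k -> {ffun job -> 'I_L}} | `[< good_for_S l hs >]]| <=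
  \sum_(J : {set job} | (l < #|J|)%N && (Cload J <= L)%N) #|badh L l J| ^ k)%N.
Proof.
move=> k0.
have -> : (\sum_(J : {set job} | (l < #|J|)%N && (Cload J <= L)%N) #|badh L l J| ^ k =
   \sum_(J : {set job} | (l < #|J|)%N && (Cload J <= L)%N) #|[set hs : {ffun 'I_k -> {ffun job -> 'I_L}} in ffun_on (mem (badh L l J))]|)%N.
  by apply: eq_bigr => J _; rewrite [RHS]cardsE card_ffun_on card_ord.
apply: union_bound => hs; rewrite !inE => /asboolPn.
move=> /existsNP [J /not_implyP [jJ /not_implyP [CD /forallNP nG]]].
have CL : (Cload J <= L)%N by apply: leq_trans CD; exact: leq_addr.
apply: (@ex_intro2 _ _ _ J).
  rewrite CL andbT ltnNge; apply/negP => Jl.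
  by apply: (nG (Ordinal k0)); apply: small_good.
rewrite inE; apply/ffun_onP => i; rewrite inE; apply/asboolPn => g.
exact: nG i g.
Qed.

End Final1.

Lemma bin_le_exp n t : ('C(n, t) <= n ^ t)%N.
Proof.
apply: leq_trans (ffact_le_exp n t); rewrite -bin_ffact.
by rewrite leq_pmulr // fact_gt0.
Qed.

Section Final2.
Variable R : realType.
Variables (M : finType) (S : seq (seq M)) (nI l : nat).
Local Notation job := (job S nI).
Local Open Scope ring_scope.

Lemma sum_J (w : R) : 0 <= w -> #|{: job}|%:R * w <= 1 / 2 ->
  \sum_(J : {set job} | (l < #|J|)%N) w ^+ #|J| <= 2 * (#|{: job}|%:R * w) ^+ l.+1.
Proof.
move=> w0 nw.
pose g (t : nat) : R := if (l < t)%N then w ^+ t else 0.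
have -> : \sum_(J : {set job} | (l < #|J|)%N) w ^+ #|J| =
          \sum_(J : {set job} | J \subset [set: job]) g #|J|.
  rewrite big_mkcond [RHS]big_mkcond; apply: eq_bigr => J _.
  by rewrite subsetT /g.
rewrite sum_subsets cardsT.
apply: le_trans (geom_bound _ #|{: job}|.+1 _ nw); last by rewrite mulr_ge0.
apply: ler_sum => t _; rewrite /g; case: ifP => _; last by rewrite mulr0.
rewrite exprMn ler_wpM2r ?exprn_ge0 // -natrX ler_nat.
exact: bin_le_exp.
Qed.

End Final2.

Section Final3.
Variable R : realType.
Local Open Scope ring_scope.

Lemma e_low : 2 <= expR (1 : R).
Proof. by have := @expR_ge1Dx R 1; rewrite (_ : 1 + 1 = 2). Qed.

Lemma ehalf : expR (1 / 2 : R) <= 2.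
Proof.
have h := @expR_ge1Dx R (- (1 / 2)).
have p := @expRxMexpNx_1 R (1 / 2).
have q := @expR_gt0 R (1 / 2).
have q' := @expR_gt0 R (- (1 / 2)).
nra.
Qed.

Lemma e_up : expR (1 : R) <= 4.
Proof.
have -> : expR (1 : R) = expR (1 / 2) ^+ 2 by rewrite -expRM_natl; congr expR; lra.
rewrite (_ : (4 : R) = 2 ^+ 2); last by rewrite expr2; lra.
by rewrite lerXn2r ?nnegrE ?expR_ge0 ?ehalf.
Qed.

Lemma e4 : expR (4 : R) <= 256.
Proof.
have -> : expR (4 : R) = expR (1 / 2) ^+ 8 by rewrite -expRM_natl; congr expR; lra.
rewrite (_ : (256 : R) = 2 ^+ 8); last by rewrite !exprS expr0; lra.
by rewrite lerXn2r ?nnegrE ?expR_ge0 ?ehalf.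
Qed.

Lemma ln_half (u : R) : 0 < u -> ln u <= u / 2.
Proof.
move=> u0.
have h1 : ln (1 + (u / 2 - 1)) <= u / 2 - 1 by apply: le_ln1Dx; lra.
have h2 : ln (2 : R) <= 1.
  have : ln (2 : R) <= ln (expR 1).
    have two : (0 : R) < 2 by lra.
    by rewrite ler_ln ?posrE ?expR_gt0 //; exact: e_low.
  by rewrite expRK.
have -> : u = (1 + (u / 2 - 1)) * 2 by lra.
rewrite lnM ?posrE; last by lra.
  by lra.
by lra.
Qed.

End Final3.

End File7.

Unset Implicit Arguments. Set Strict Implicit.
Local Open Scope ring_scope.

Theorem lemma5p18 (R : realType) (M : finType) (c b : R) (S : seq (seq M))
    (L l k : nat) :
  (32 <= #|M|)%N -> 1 <= c -> uniq S -> (0 < size S)%N -> (0 < L)%N ->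
  (L%:R <= 2 * ((#|M|%:R : R) `^ c)) ->
  150 * c * ln (#|M|%:R : R) / ln (ln (#|M|%:R : R)) <= l%:R ->
  8 * (b + 1) * (ln ((size S)%:R : R) + (c + 1) * ln (#|M|%:R : R)) / ln (l%:R : R)
    <= k%:R ->
  let nI := Num.truncn ((#|M|%:R : R) `^ c) in
  1 - 2 * (#|M|%:R : R) `^ (- b) <=
    #|[set hs : {ffun 'I_k -> {ffun job S nI -> 'I_L}} | `[< good_for_S l hs >]]|%:R
    / #|{: {ffun 'I_k -> {ffun job S nI -> 'I_L}}}|%:R.
Proof.
move=> HN c1 uS s0 L0 HL Hl Hk; cbv zeta.
set nI := Num.truncn _.
set N := (#|M|%:R : R).
set good := [set hs : {ffun 'I_k -> {ffun job S nI -> 'I_L}} | `[< good_for_S l hs >]].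
set n := #|{: job S nI}|.
have tot : #|{: {ffun 'I_k -> {ffun job S nI -> 'I_L}}}| = ((L ^ n) ^ k)%N.
  by rewrite !card_ffun !card_ord.
have totp : (0 : R) < ((L ^ n) ^ k)%:R by rewrite ltr0n !expn_gt0 L0.
rewrite tot.
have [big|small] := lerP 1 (2 * N `^ (- b)).
  apply: (@le_trans _ _ 0); first by lra.
  by rewrite divr_ge0 // ltW.
have N0 : (0 : R) < N by rewrite ltr0n (leq_trans _ HN).
have N32 : (32 : R) <= N by rewrite ler_nat.
set x := ln N.
have xN : expR x = N by rewrite lnK ?posrE.
have e2 := @e_low R. have e4' := @e_up R.
have x1 : 1 < x by rewrite -(@ltr_expR R) xN; lra.
set lx := ln x.
have lx0 : 0 < lx by rewrite ln_gt0.
have lxh : lx <= x / 2 by apply: ln_half; lra.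
have Hl' : 150 * c * x <= l%:R * lx by rewrite -ler_pdivrMr.
have l300 : 300 <= (l%:R : R).
  have h : l%:R * lx <= l%:R * (x / 2) by apply: ler_wpM2l.
  have h2 : 300 * c * x <= l%:R * x by lra.
  have h3 : 300 * c <= l%:R by rewrite -(ler_pM2r (x := x)) //; lra.
  lra.
have lpos : (0 : R) < l%:R by lra.
set lam := ln (l%:R : R).
have lE : expR lam = l%:R by rewrite lnK ?posrE.
have lam4 : 4 <= lam.
  by rewrite -(@ler_expR R) lE; apply: le_trans (@e4 R) _; lra.
have lamx : lx <= 2 * lam.
  have c0 : 0 < 150 * c * x by rewrite !mulr_gt0 //; lra.
  have pl : 0 < l%:R * lx by rewrite mulr_gt0.
  have h1 : ln (150 * c * x) <= ln (l%:R * lx) by rewrite ler_ln ?posrE.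
  have x0 : 0 < x by lra.
  have h2' : x <= 150 * c * x by nra.
  have h2 : lx <= ln (150 * c * x) by rewrite ler_ln ?posrE.
  have h3 : ln lx <= lx / 2 by exact: ln_half.
  have h4 : ln (l%:R * lx) = lam + ln lx by rewrite lnM ?posrE.
  rewrite h4 in h1.
  lra.
have Q : 75 * c * x <= l%:R * lam.
  have : l%:R * lx <= l%:R * (2 * lam) by apply: ler_wpM2l; lra.
  lra.
have Q4 : 4 * l%:R <= l%:R * lam by rewrite mulrC ler_wpM2l; lra.
have cx : x <= c * x by rewrite ler_peMl //; lra.
have x0 : 0 < x by lra.
have cx1 : 1 <= c * x by lra.
set a := lam / 2.
set r := expR 1 * expR a / l%:R.
have rE : r = expR (1 - lam / 2).
  by rewrite /r -lE -expRD -expRB; congr expR; rewrite /a; lra.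
have r2 : r <= 1 / 2.
  rewrite rE; apply: (@le_trans _ _ (expR (-1))); first by rewrite ler_expR; lra.
  have p := @expRxMexpNx_1 R 1. have q := @expR_gt0 R (-1). nra.
have Nc : N `^ c = expR (c * x) by rewrite /powR gt_eqF.
have Nb : N `^ (- b) = expR (- b * x) by rewrite /powR gt_eqF.
have keyb : (#|{: key M L}|%:R : R) * (2 * r ^+ l.+1) <= 1.
  have ck : #|{: key M L}| = (2 * L * #|M|)%N by rewrite card_prod card_ord.
  rewrite ck !natrM -/N.
  have HL' : L%:R <= 2 * expR (c * x) by rewrite -Nc.
  have rl : r ^+ l.+1 = expR (l.+1%:R * (1 - lam / 2)) by rewrite rE expRM_natl.
  rewrite rl -xN.
  set E := l.+1%:R * (1 - lam / 2).
  have E3 : E + c * x + x <= -3 by rewrite /E -natr1; lra.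
  have e3 : expR (E + c * x + x) <= expR (-3) by rewrite ler_expR.
  have e8 : 8 * expR (-3 : R) <= 1.
    have p := @expRxMexpNx_1 R 3. have q := @expR_gt0 R (-3).
    have h3 : expR (3 : R) = expR 1 ^+ 3 by rewrite -expRM_natl mulr1.
    have h8 : 8 <= expR (3 : R).
      rewrite h3 (_ : (8 : R) = 2 ^+ 3); last by rewrite !exprS expr0; lra.
      by rewrite lerXn2r ?nnegrE ?expR_ge0 //; lra.
    nra.
  rewrite !expRD in e3.
  have hA := @expR_gt0 R (c * x). have hB := @expR_gt0 R x. have hC := @expR_gt0 R E.
  have hBC : 0 < expR x * expR E by rewrite mulr_gt0.
  have hL : 0 <= (L%:R : R) by [].
  nra.
have l0 : (0 < l)%N by rewrite -(ltr0n R).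
have qb : forall J : {set job S nI}, (l < #|J|)%N -> (Cload J <= L)%N ->
    (#|badh L l J|%:R : R) / (L ^ n)%:R <= expR (- (lam / 8)) ^+ #|J|.
  move=> J lJ CL.
  have a0 : 0 <= a by rewrite /a; lra.
  apply: le_trans (qJ L0 l0 a0 CL r2) _.
  rewrite -expRD -expRM_natl ler_expR.
  have nJ : (l.+1%:R : R) <= #|J|%:R by rewrite ler_nat.
  have nl : 4 * #|J|%:R <= #|J|%:R * lam by rewrite mulrC ler_wpM2l.
  rewrite -natr1 in nJ.
  rewrite /a; lra.
have bpos : 0 < b.
  have h : expR (- b * x) < 1 by rewrite -Nb; have := powR_ge0 N (- b); lra.
  rewrite expR_lt1 in h; nra.
have lam0 : 0 < lam by lra.
have Hk' : 8 * (b + 1) * (ln ((size S)%:R : R) + (c + 1) * x) <= k%:R * lam.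
  by rewrite -ler_pdivrMr.
have ls0 : 0 <= ln ((size S)%:R : R) by apply: ln_ge0; rewrite ler1n.
have kpos : (0 < k)%N.
  rewrite -(ltr0n R); have : 0 < (b + 1) * (ln ((size S)%:R : R) + (c + 1) * x).
    by apply: mulr_gt0; nra.
  move=> h; have : 0 < k%:R * lam by lra.
  by rewrite pmulr_lgt0.
set w := expR (- (lam / 8)) ^+ k.
have w0 : 0 <= w by rewrite exprn_ge0 // expR_ge0.
have rho : n%:R * w <= N `^ (- b).
  have nE : n = (size S * nI)%N by rewrite /n card_prod card_seq_sub // card_ord.
  have nIc : (nI%:R : R) <= N `^ c by rewrite truncn_le powR_ge0.
  have sE : ((size S)%:R : R) = expR (ln (size S)%:R) by rewrite lnK // posrE ltr0n.
  have wE : w = expR (- (k%:R * lam / 8)) by rewrite /w -expRM_natl; congr expR; lra.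
  rewrite nE natrM wE Nb Nc in nIc *.
  apply: (@le_trans _ _ (expR (ln (size S)%:R) * expR (c * x) * expR (- (k%:R * lam / 8)))).
    apply: ler_wpM2r; first exact: expR_ge0.
    by rewrite -sE; apply: ler_wpM2l.
  rewrite -!expRD ler_expR.
  have p1 : 0 <= b * ln ((size S)%:R : R) by rewrite mulr_ge0 // ltW.
  have p2 : 0 <= b * (c * x) by rewrite !mulr_ge0 // ?ltW //; lra.
  lra.
have nw2 : n%:R * w <= 1 / 2 by lra.
have nw1 : n%:R * w <= 1 by lra.
have nw0 : 0 <= n%:R * w by rewrite mulr_ge0.
have Lnp : (0 : R) < (L ^ n)%:R by rewrite ltr0n expn_gt0 L0.
have hbad : (#|~: good|%:R : R) / ((L ^ n) ^ k)%:R <= 2 * N `^ (- b).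
  have hb := bad_sum S nI L l kpos.
  have hb' : (#|~: good|%:R : R) <= \sum_(J : {set job S nI} | (l < #|J|)%N && (Cload J <= L)%N)
        ((#|badh L l J| ^ k)%N)%:R by rewrite -natr_sum ler_nat.
  rewrite ler_pdivrMr //; apply: le_trans hb' _.
  have step : \sum_(J : {set job S nI} | (l < #|J|)%N && (Cload J <= L)%N)
        ((#|badh L l J| ^ k)%N)%:R <=
      ((L ^ n) ^ k)%:R * \sum_(J : {set job S nI} | (l < #|J|)%N && (Cload J <= L)%N) w ^+ #|J|.
    rewrite mulr_sumr; apply: ler_sum => J /andP [lJ CL].
    have E : ((L ^ n) ^ k)%:R * (expR (- (lam / 8)) ^+ k) ^+ #|J| =
             ((L ^ n)%:R * expR (- (lam / 8)) ^+ #|J|) ^+ k :> R.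
      by rewrite exprMn natrX -!exprM mulnC.
    rewrite /w E natrX.
    rewrite lerXn2r ?nnegrE ?mulr_ge0 ?exprn_ge0 ?expR_ge0 //.
    by have := qb J lJ CL; rewrite ler_pdivrMr // mulrC.
  apply: le_trans step _.
  rewrite mulrC; apply: ler_wpM2r; first exact: ltW.
  apply: (@le_trans _ _ (\sum_(J : {set job S nI} | (l < #|J|)%N) w ^+ #|J|)).
    rewrite [X in _ <= X]big_mkcond [X in X <= _]big_mkcond /=.
    apply: ler_sum => J _; case: (l < #|J|)%N => //=; case: (_ <= _)%N => //.
    by rewrite exprn_ge0.
  apply: le_trans (sum_J l w0 nw2) _.
  rewrite ler_pM2l ?ltr0n //; apply: le_trans rho.
  by rewrite exprS; apply: ler_piMr => //; apply: exprn_ile1.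
have cC : (#|good| + #|~: good|)%N = ((L ^ n) ^ k)%N by rewrite cardsC -tot.
have -> : (#|good|%:R : R) = ((L ^ n) ^ k)%:R - #|~: good|%:R.
  by rewrite -cC natrD addrK.
rewrite mulrBl divff ?gt_eqF // lerD2l lerN2.
exact: hbad.
Qed.
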